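(* Let $\delta\in(0,1]$, let $a_0\ge0$ and $a_1,a_2,\dots,a_T\ge0$, and let $f:[0,\infty)\to[0,\infty)$ be non-increasing. Then $$\sum_{t=1}^T\sum_{i=0}^{t-1}(1-\delta)^i\,a_{t-i:t}\,f(a_{0:t})\le\frac{1}{\delta^2}\int_{a_0}^{a_{0:T}}f(x)\,dx.$$
   Context: For a sequence $(a_s)$, $a_{m:n}=\sum_{s=m}^na_s$. *)

(* Defs.v *)
From Stdlib Require Import Reals List.
From Coquelicot Require Import Coquelicot.
Open Scope R_scope.

(* sumR m n g = g m + g (m+1) + ... + g n  (empty, i.e. 0, if n < m). *)
Definition sumR (m n : nat) (g : nat -> R) : R :=
  fold_right Rplus 0 (map g (seq m (S n - m))).

Definition psum (a : nat -> R) (m n : nat) : R := sumR m n a.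

(* Main.v *)
Require Import Defs.
From Stdlib Require Import Reals List.
From Coquelicot Require Import Coquelicot.
From Stdlib Require Import RList Lra Lia ClassicalEpsilon.
Open Scope R_scope.
Lemma IsStepFun_ext (f g : R -> R) (a b : R) : a <= b ->
  (forall x, a < x < b -> f x = g x) -> IsStepFun f a b -> IsStepFun g a b.
Proof.
  intros Hab Hfg [l [lf (Hord & H0 & Hl & Hlen & Hc)]].
  exists l, lf. repeat split; try assumption.
  intros i Hi x Hx. unfold open_interval in Hx.
  rewrite Rmin_left in H0 by lra. rewrite Rmax_right in Hl by lra.
  pose proof (proj1 (RList.RList_P6 l) Hord) as H6.
  assert (A1 : pos_Rl l 0 <= pos_Rl l i) by (apply H6; lia).
  assert (A2 : pos_Rl l (S i) <= pos_Rl l (Init.Nat.pred (length l))) by (apply H6; lia).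
  rewrite <- Hfg by lra. apply (Hc i Hi x). exact Hx.
Qed.

Lemma SF_int_eq (a b : R) (f g : StepFun a b) : a <= b ->
  (forall x, a < x < b -> f x = g x) -> RiemannInt_SF f = RiemannInt_SF g.
Proof.
  intros Hab H. apply Rle_antisym; apply StepFun_P37; try assumption;
  intros x Hx; rewrite H by assumption; lra.
Qed.

Fixpoint Gf (f : R -> R) (x : nat -> R) (k : nat) (t : R) : R :=
  match k with 0 => f (x 0%nat) | S k' => if Rle_dec t (x k') then Gf f x k' t else f (x k') end.
Fixpoint Ef (f : R -> R) (x : nat -> R) (k : nat) (t : R) : R :=
  match k with 0 => 0 | S k' => if Rle_dec t (x k') then Ef f x k' t else f (x k') - f (x (S k')) end.

Lemma x_mono (x : nat -> R) (h : R) : 0 <= h -> (forall k, x (S k) = x k + h) ->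
  forall i j, (i <= j)%nat -> x i <= x j.
Proof.
  intros Hh Hx i j Hij. induction Hij. lra. rewrite Hx. lra.
Qed.

Lemma claim (f : R -> R) (x : nat -> R) (h : R) (N : nat) :
  0 <= h -> (forall k, x (S k) = x k + h) ->
  (forall u v, x 0%nat <= u -> u <= v -> v <= x N -> f v <= f u) ->
  forall k, (k <= N)%nat ->
  exists pG : IsStepFun (Gf f x k) (x 0%nat) (x k),
  exists pE : IsStepFun (Ef f x k) (x 0%nat) (x k),
  (forall t, x 0%nat <= t <= x k -> Rabs (f t - Gf f x k t) <= Ef f x k t) /\
  RiemannInt_SF (mkStepFun pE) = h * (f (x 0%nat) - f (x k)).
Proof.
  intros Hh Hx Hf. set (a := x 0%nat).
  pose proof (x_mono x h Hh Hx) as Hm.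
  induction k as [|k IH]; intros Hk.
  - exists (StepFun_P4 a a (f a)). exists (StepFun_P4 a a 0). split.
    + intros t Ht. simpl. unfold a in *. replace t with (x 0%nat) by lra.
      rewrite Rminus_diag, Rabs_R0. lra.
    + change (RiemannInt_SF (mkStepFun (StepFun_P4 a a 0)) = h * (f a - f a)).
      rewrite StepFun_P18. ring.
  - destruct (IH ltac:(lia)) as [pG [pE [Hb Hi]]].
    assert (Hak : a <= x k) by (apply Hm; lia).
    assert (Hkk : x k <= x (S k)) by (apply Hm; lia).
    assert (HkN : x (S k) <= x N) by (apply Hm; lia).
    assert (pG1 : IsStepFun (Gf f x (S k)) a (x k)).
    { apply (IsStepFun_ext (Gf f x k)); auto. intros t Ht. simpl.
      destruct (Rle_dec t (x k)); [reflexivity | lra]. }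
    assert (pG2 : IsStepFun (Gf f x (S k)) (x k) (x (S k))).
    { apply (IsStepFun_ext (fct_cte (f (x k)))); auto.
      2: apply StepFun_P4. intros t Ht. simpl.
      destruct (Rle_dec t (x k)); [lra | reflexivity]. }
    assert (pE1 : IsStepFun (Ef f x (S k)) a (x k)).
    { apply (IsStepFun_ext (Ef f x k)); auto. intros t Ht. simpl.
      destruct (Rle_dec t (x k)); [reflexivity | lra]. }
    assert (pE2 : IsStepFun (Ef f x (S k)) (x k) (x (S k))).
    { apply (IsStepFun_ext (fct_cte (f (x k) - f (x (S k))))); auto.
      2: apply StepFun_P4. intros t Ht. simpl.
      destruct (Rle_dec t (x k)); [lra | reflexivity]. }
    exists (StepFun_P46 pG1 pG2). exists (StepFun_P46 pE1 pE2). split.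
    + intros t Ht. simpl. destruct (Rle_dec t (x k)).
      * apply Hb. lra.
      * assert (f (x (S k)) <= f t) by (apply Hf; unfold a in *; lra).
        assert (f t <= f (x k)) by (apply Hf; unfold a in *; lra).
        rewrite Rabs_left1 by lra. lra.
    + rewrite <- (StepFun_P43 pE1 pE2).
      rewrite (SF_int_eq a (x k) (mkStepFun pE1) (mkStepFun pE)) by
        (first [assumption | intros t Ht; simpl; destruct (Rle_dec t (x k)); [reflexivity | lra]]).
      rewrite Hi.
      rewrite (SF_int_eq (x k) (x (S k)) (mkStepFun pE2)
                 (mkStepFun (StepFun_P4 (x k) (x (S k)) (f (x k) - f (x (S k)))))) by
        (first [assumption | intros t Ht; simpl; destruct (Rle_dec t (x k)); [lra | reflexivity]]).
      rewrite StepFun_P18. rewrite Hx. ring.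
Qed.

Lemma mono_ex_RInt (f : R -> R) (a b : R) : a <= b ->
  (forall u v, a <= u -> u <= v -> v <= b -> f v <= f u) -> ex_RInt f a b.
Proof.
  intros Hab Hf.
  destruct (Req_dec a b) as [<-|Hne]; [apply ex_RInt_point|].
  apply ex_RInt_Reals_1. intro eps.
  set (K := (b - a) * (f a - f b)).
  assert (HK : 0 <= K) by (unfold K; assert (f b <= f a) by (apply Hf; lra); nra).
  assert (He : 0 < eps / (K + 1)) by (apply Rdiv_lt_0_compat; [apply cond_pos | lra]).
  assert (Hex : exists phi : StepFun a b, exists psi : StepFun a b,
    (forall t, Rmin a b <= t <= Rmax a b -> Rabs (f t - phi t) <= psi t) /\
    Rabs (RiemannInt_SF psi) < eps).
  { destruct (archimed_cor1 _ He) as [N [HN HN0]].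
    assert (HNr : 0 < INR N) by (apply lt_0_INR; exact HN0).
    set (h := (b - a) / INR N).
    set (x := fun k : nat => a + INR k * h).
    assert (Hx0 : x 0%nat = a) by (unfold x; simpl; ring).
    assert (HxN : x N = b) by (unfold x, h; field; lra).
    assert (Hh : 0 <= h) by (unfold h; apply Rdiv_le_0_compat; lra).
    assert (HxS : forall k, x (S k) = x k + h) by (intro k; unfold x; rewrite S_INR; ring).
    assert (Hf' : forall u v, x 0%nat <= u -> u <= v -> v <= x N -> f v <= f u)
      by (rewrite Hx0, HxN; exact Hf).
    pose proof (claim f x h N Hh HxS Hf' N (Nat.le_refl N)) as C.
    rewrite Hx0, HxN in C.
    destruct C as [pG [pE [Hb Hi]]].
    exists (mkStepFun pG), (mkStepFun pE). split.
    - rewrite Rmin_left, Rmax_right by lra. exact Hb.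
    - rewrite Hi. 
      assert (Hv : h * (f a - f b) = K / INR N) by (unfold h, K; field; lra).
      rewrite Hv. rewrite Rabs_right by (apply Rle_ge, Rdiv_le_0_compat; lra).
      assert (/ INR N * (K + 1) < eps).
      { apply Rmult_lt_reg_r with (/ (K + 1)). apply Rinv_0_lt_compat; lra.
        replace (/ INR N * (K + 1) * / (K + 1)) with (/ INR N) by (field; lra). exact HN. }
      unfold Rdiv. assert (0 < / INR N) by (apply Rinv_0_lt_compat; lra). nra. }
  destruct (constructive_indefinite_description _ Hex) as [phi Hphi].
  exists phi.
  destruct (constructive_indefinite_description _ Hphi) as [psi Hpsi].
  exists psi. exact Hpsi.
Qed.
Lemma fr_app (l1 l2 : list R) :
  fold_right Rplus 0 (l1 ++ l2) = fold_right Rplus 0 l1 + fold_right Rplus 0 l2.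
Proof. induction l1; simpl; [ring | rewrite IHl1; ring]. Qed.

Lemma sumR_Sr m n g : (m <= S n)%nat -> sumR m (S n) g = sumR m n g + g (S n).
Proof.
  intros H. unfold sumR.
  replace (S (S n) - m)%nat with (S (S n - m)) by lia.
  rewrite seq_S, map_app, fr_app.
  replace (m + (S n - m))%nat with (S n) by lia. simpl. ring.
Qed.

Lemma sumR_empty m n g : (n < m)%nat -> sumR m n g = 0.
Proof. intros H. unfold sumR. replace (S n - m)%nat with 0%nat by lia. reflexivity. Qed.

Lemma sumR_shift m n g : sumR (S m) (S n) g = sumR m n (fun j => g (S j)).
Proof. unfold sumR. simpl (S (S n) - S m)%nat. rewrite <- seq_shift, map_map. reflexivity. Qed.

Lemma sumR_Sl m n g : (m <= n)%nat -> sumR m n g = g m + sumR (S m) n g.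
Proof.
  intros H. unfold sumR. replace (S n - m)%nat with (S (S n - S m)) by lia. reflexivity.
Qed.

Lemma sumR_ext m n g h : (forall i, (m <= i <= n)%nat -> g i = h i) -> sumR m n g = sumR m n h.
Proof.
  intros H. unfold sumR. f_equal. apply map_ext_in. intros i Hi.
  apply in_seq in Hi. apply H. lia.
Qed.

Lemma fr_mulr (l : list nat) g c :
  fold_right Rplus 0 (map (fun i => g i * c) l) = fold_right Rplus 0 (map g l) * c.
Proof. induction l; simpl; [ring | rewrite IHl; ring]. Qed.

Lemma sumR_mulr m n g c : sumR m n (fun i => g i * c) = sumR m n g * c.
Proof. apply fr_mulr. Qed.

Lemma sumR_mull m n g c : sumR m n (fun i => c * g i) = c * sumR m n g.
Proof.
  rewrite Rmult_comm, <- sumR_mulr. apply sumR_ext. intros; ring.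
Qed.

Lemma fr_plus (l : list nat) g h :
  fold_right Rplus 0 (map (fun i => g i + h i) l) =
  fold_right Rplus 0 (map g l) + fold_right Rplus 0 (map h l).
Proof. induction l; simpl; [ring | rewrite IHl; ring]. Qed.

Lemma sumR_plus m n g h : sumR m n (fun i => g i + h i) = sumR m n g + sumR m n h.
Proof. apply fr_plus. Qed.

Lemma fr_nonneg (l : list nat) g : (forall i, 0 <= g i) -> 0 <= fold_right Rplus 0 (map g l).
Proof. intros H; induction l; simpl; [lra | specialize (H a); lra]. Qed.

Lemma sumR_nonneg m n g : (forall i, 0 <= g i) -> 0 <= sumR m n g.
Proof. apply fr_nonneg. Qed.

Lemma geom (q : R) n : (1 - q) * sumR 0 n (fun i => q ^ i) = 1 - q ^ (S n).
Proof.
  induction n.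
  - unfold sumR; simpl; ring.
  - rewrite sumR_Sr by lia. rewrite Rmult_plus_distr_l, IHn. simpl. ring.
Qed.

Definition Dd (q : R) (a : nat -> R) (u : nat) :=
  sumR 0 u (fun i => q ^ i * psum a (S u - i) (S u)).

Lemma D_rec q a u :
  Dd q a (S u) = q * Dd q a u + a (S (S u)) * sumR 0 (S u) (fun i => q ^ i).
Proof.
  unfold Dd.
  rewrite (sumR_ext 0 (S u) _ (fun i => q ^ i * psum a (S (S u) - i) (S u) + a (S (S u)) * q ^ i)).
  2: { intros i Hi. unfold psum. rewrite sumR_Sr by lia. ring. }
  rewrite sumR_plus, sumR_mull.
  rewrite (sumR_Sl 0 (S u)) by lia.
  unfold psum at 1. rewrite (sumR_empty (S (S u) - 0)) by lia.
  rewrite sumR_shift. simpl (S (S u) - _)%nat.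
  rewrite (sumR_ext 0 u _ (fun j => q * (q ^ j * psum a (S u - j) (S u)))).
  2: { intros i Hi. simpl. ring. }
  rewrite sumR_mull. change (fun i : nat => q ^ i) with (pow q). ring.
Qed.
Theorem lemma4 (delta : R) (a : nat -> R) (f : R -> R) (T : nat) :
  0 < delta <= 1 ->
  (forall s : nat, 0 <= a s) ->
  (forall x : R, 0 <= x -> 0 <= f x) ->
  (forall x y : R, 0 <= x -> x <= y -> f y <= f x) ->
  sumR 1 T (fun t =>
    sumR 0 (t - 1) (fun i =>
      (1 - delta) ^ i * psum a (t - i) t * f (psum a 0 t)))
  <= / delta ^ 2 * RInt f (a 0%nat) (psum a 0 T).
Proof.
  intros Hd Ha Hf0 Hfm.
  assert (S_S : forall t, psum a 0 (S t) = psum a 0 t + a (S t))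
    by (intro t; unfold psum; apply sumR_Sr; lia).
  assert (S0 : psum a 0 0 = a 0%nat) by (unfold psum, sumR; simpl; ring).
  assert (Snn : forall t, a 0%nat <= psum a 0 t).
  { induction t; [rewrite S0; lra | rewrite S_S; specialize (Ha (S t)); lra]. }
  assert (Hex : forall x y, 0 <= x -> x <= y -> ex_RInt f x y).
  { intros x y Hx Hxy. apply mono_ex_RInt; auto. intros u v Hu Huv _. apply Hfm; lra. }
  assert (Hlow : forall x y, 0 <= x -> x <= y -> (y - x) * f y <= RInt f x y).
  { intros x y Hx Hxy.
    assert (E : RInt (fun _ => f y) x y = (y - x) * f y) by (rewrite RInt_const; reflexivity).
    rewrite <- E. apply RInt_le; auto. apply ex_RInt_const.
    intros t Ht. apply Hfm; lra. }
  assert (Hch : forall x y z, 0 <= x -> x <= y -> y <= z -> RInt f x z = RInt f x y + RInt f y z).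
  { intros x y z Hx Hxy Hyz. symmetry. apply (RInt_Chasles f x y z); apply Hex; lra. }
  set (id := / delta).
  assert (Hid1 : 1 <= id) by (unfold id; rewrite <- Rinv_1; apply Rinv_le_contravar; lra).
  assert (Hdid : delta * id = 1) by (unfold id; field; lra).
  assert (Hid2 : / delta ^ 2 = id * id) by (unfold id; field; lra).
  rewrite Hid2.
  pose proof (Ha 0%nat) as Ha0.
  destruct T as [|u].
  - rewrite sumR_empty by lia. rewrite S0, RInt_point. unfold zero; simpl. nra.
  - set (F := fun j : nat => f (psum a 0 (S j))).
    set (D := Dd (1 - delta) a).
    set (R_ := fun j : nat => RInt f (a 0%nat) (psum a 0 (S j))).
    assert (HF : forall j, 0 <= F j) by (intro j; apply Hf0; specialize (Snn (S j)); lra).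
    assert (HFm : forall j, F (S j) <= F j).
    { intro j. unfold F. apply Hfm. specialize (Snn (S j)); lra. rewrite (S_S (S j)).
      specialize (Ha (S (S j))); lra. }
    assert (HD : forall j, 0 <= D j).
    { intro j. unfold D, Dd. apply sumR_nonneg. intro i. apply Rmult_le_pos.
      apply pow_le; lra. unfold psum; apply sumR_nonneg; exact Ha. }
    assert (HG : forall n, sumR 0 n (fun i => (1 - delta) ^ i) <= id).
    { intro n. pose proof (geom (1 - delta) n) as Hg.
      replace (1 - (1 - delta)) with delta in Hg by ring.
      assert (0 <= (1 - delta) ^ S n) by (apply pow_le; lra).
      assert (Hs : sumR 0 n (fun i => (1 - delta) ^ i) = id * (1 - (1 - delta) ^ S n)).
      { rewrite <- Hg. unfold id. field. lra. }
      rewrite Hs. nra. }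
    assert (Inv : forall v, sumR 0 v (fun j => D j * F j) + (id - 1) * D v * F v <= id * id * R_ v).
    { induction v as [|v IH].
      - unfold sumR at 1. simpl.
        assert (D0 : D 0%nat = a 1%nat) by (unfold D, Dd, psum, sumR; simpl; ring).
        rewrite D0.
        assert (Hr : a 1%nat * F 0%nat <= R_ 0%nat).
        { unfold R_, F. rewrite S_S, S0. 
          replace (a 1%nat) with (a 0%nat + a 1%nat - a 0%nat) at 1 by ring.
          apply Hlow; [lra | specialize (Ha 1%nat); lra]. }
        assert (0 <= a 1%nat * F 0%nat) by (apply Rmult_le_pos; auto).
        assert (a 1%nat * F 0%nat * id <= a 1%nat * F 0%nat * (id * id)).
        { apply Rmult_le_compat_l; auto. nra. }
        assert (id * id * (a 1%nat * F 0%nat) <= id * id * R_ 0%nat).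
        { apply Rmult_le_compat_l; auto. nra. }
        nra.
      - rewrite sumR_Sr by lia.
        assert (Dr : D (S v) = (1 - delta) * D v + a (S (S v)) * sumR 0 (S v) (fun i => (1 - delta) ^ i))
          by (unfold D; apply D_rec).
        set (G := sumR 0 (S v) (fun i => (1 - delta) ^ i)) in Dr.
        assert (HGv : G <= id) by apply HG.
        assert (HG0 : 0 <= G) by (apply sumR_nonneg; intro; apply pow_le; lra).
        assert (Rr : R_ (S v) >= R_ v + a (S (S v)) * F (S v)).
        { unfold R_, F. rewrite (Hch (a 0%nat) (psum a 0 (S v)) (psum a 0 (S (S v)))).
          2: lra. 2: apply Snn. 2: (rewrite (S_S (S v)); specialize (Ha (S (S v))); lra).
          apply Rle_ge, Rplus_le_compat_l.
          replace (a (S (S v))) with (psum a 0 (S (S v)) - psum a 0 (S v)) at 1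
            by (rewrite (S_S (S v)); ring).
          apply Hlow. specialize (Snn (S v)); lra. rewrite (S_S (S v)); specialize (Ha (S (S v))); lra. }
        set (Fv := F v) in *. set (F1 := F (S v)) in *. set (Dv := D v) in *.
        set (A := a (S (S v))) in *.
        assert (HA : 0 <= A) by apply Ha.
        assert (HF1 : 0 <= F1) by apply HF.
        assert (HF1v : F1 <= Fv) by apply HFm.
        assert (HDv : 0 <= Dv) by apply HD.
        assert (E1 : id * D (S v) * F1 = (id - 1) * Dv * F1 + id * A * G * F1).
        { rewrite Dr. replace (id * ((1 - delta) * Dv + A * G) * F1) with
            ((id - delta * id) * Dv * F1 + id * A * G * F1) by ring. rewrite Hdid. ring. }
        assert (H1 : (id - 1) * Dv * F1 <= (id - 1) * Dv * Fv).
        { apply Rmult_le_compat_l; auto. apply Rmult_le_pos; lra. }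
        assert (H2 : id * A * G * F1 <= id * A * id * F1).
        { assert (0 <= id * A) by (apply Rmult_le_pos; lra).
          replace (id * A * G * F1) with ((id * A) * (G * F1)) by ring.
          replace (id * A * id * F1) with ((id * A) * (id * F1)) by ring.
          apply Rmult_le_compat_l; auto. apply Rmult_le_compat_r; auto. }
        assert (H3 : id * id * R_ v + id * id * (A * F1) <= id * id * R_ (S v)).
        { rewrite <- Rmult_plus_distr_l. apply Rmult_le_compat_l. nra. lra. }
        assert (Ex : sumR 0 v (fun j => D j * F j) + D (S v) * F1 + (id - 1) * D (S v) * F1
                     = sumR 0 v (fun j => D j * F j) + id * D (S v) * F1) by ring.
        fold F1. rewrite Ex, E1. nra. }
    rewrite sumR_shift.
    rewrite (sumR_ext 0 u _ (fun j => D j * F j)).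
    2: { intros j Hj. replace (S j - 1)%nat with j by lia. unfold D, Dd, F.
         rewrite <- sumR_mulr. reflexivity. }
    specialize (Inv u). fold (R_ u).
    assert (0 <= (id - 1) * D u * F u) by (apply Rmult_le_pos; [apply Rmult_le_pos|]; auto; lra).
    lra.
Qed.
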